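(* Let $f:\mathbb{R}^n\to\mathbb{R}$ be a continuously differentiable convex function. Let $H$ be a diagonal matrix with nonnegative diagonal entries such that $f(y)\le f(x)+\nabla f(x)^T(y-x)+\tfrac12\|y-x\|_H^2$ for all $x,y\in\mathbb{R}^n$, and let $D$ be a diagonal matrix with $D\succ H$. Let $(x_k)$ be a sequence generated by the IWHT method with $D$, and assume $(x_k)$ has a limit point $\bar x$. Then the entire sequence $(x_k)$ converges to $\bar x$.
   Context: $\|z\|_A^2=z^TAz$. $C_s=\{x\in\mathbb{R}^n:\|x\|_0\le s\}$ for a positive integer $s$, where $\|x\|_0$ is the number of nonzero entries. $\mathcal{P}_{C_s}(z)=\operatorname{argmin}_{y\in C_s}\|y-z\|_2^2$ (set-valued). IWHT with diagonal $D\succ0$: start from $x_0\in C_s$; for $k\ge0$ pick $y_{k+1}\in\mathcal{P}_{C_s}\big(D^{1/2}x_k-D^{-1/2}\nabla f(x_k)\big)$ and set $x_{k+1}=D^{-1/2}y_{k+1}$. *)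

(* Defs.v *)
From HB Require Import structures.
From mathcomp Require Import all_boot all_order all_algebra.
From mathcomp Require Import all_classical all_reals all_analysis.
Set Implicit Arguments. Unset Strict Implicit. Unset Printing Implicit Defensive.
Import Order.TTheory GRing.Theory Num.Theory.
Import numFieldNormedType.Exports.
Local Open Scope ring_scope.
Local Open Scope classical_set_scope.

Section Defs.
Variables (R : realType) (n : nat).

Definition basisv (i : 'I_n) : 'rV[R]_n := delta_mx 0 i.

Definition grad (f : 'rV[R]_n -> R) (x : 'rV[R]_n) : 'rV[R]_n :=
  \row_i ('D_(basisv i) f x).

Definition C1 (f : 'rV[R]_n -> R) : Prop :=
  (forall x, differentiable f x) /\ continuous (grad f).

Definition convex_fun (f : 'rV[R]_n -> R) : Prop :=
  forall (x y : 'rV[R]_n) (t : R), 0 <= t <= 1 ->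
    f (t *: x + (1 - t) *: y) <= t * f x + (1 - t) * f y.

Definition dotv (u v : 'rV[R]_n) : R := (u *m v^T) 0 0.

Definition qnorm2 (A : 'M[R]_n) (z : 'rV[R]_n) : R := (z *m A *m z^T) 0 0.

Definition posdef (A : 'M[R]_n) : Prop :=
  forall z : 'rV[R]_n, z != 0 -> 0 < qnorm2 A z.

Definition l0norm (x : 'rV[R]_n) : nat := #|[set i | x 0 i != 0]|.

Definition Cs (s : nat) (x : 'rV[R]_n) : Prop := (l0norm x <= s)%N.

Definition sqn (z : 'rV[R]_n) : R := \sum_i (z 0 i) ^+ 2.

(* set-valued projection onto C_s: y \in P_{C_s}(z) *)
Definition proj_Cs (s : nat) (z y : 'rV[R]_n) : Prop :=
  Cs s y /\ forall y', Cs s y' -> sqn (y - z) <= sqn (y' - z).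

Definition diag_sqrt (D : 'M[R]_n) : 'M[R]_n :=
  diag_mx (\row_i Num.sqrt (D i i)).
Definition diag_invsqrt (D : 'M[R]_n) : 'M[R]_n :=
  diag_mx (\row_i (Num.sqrt (D i i))^-1).

(* x is a sequence generated by IWHT with D (row-vector convention: M z := z *m M,
   which agrees since all matrices involved are diagonal, hence symmetric) *)
Definition IWHT_seq (f : 'rV[R]_n -> R) (s : nat) (D : 'M[R]_n)
    (x : nat -> 'rV[R]_n) : Prop :=
  Cs s (x 0%N) /\
  forall k, exists y : 'rV[R]_n,
    proj_Cs s (x k *m diag_sqrt D - grad f (x k) *m diag_invsqrt D) y /\
    x k.+1 = y *m diag_invsqrt D.

Definition seq_cvg_to (x : nat -> 'rV[R]_n) (l : 'rV[R]_n) : Prop :=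
  x @ \oo --> l.

Definition seq_limit_point (x : nat -> 'rV[R]_n) (xbar : 'rV[R]_n) : Prop :=
  exists phi : nat -> nat, (forall k, (phi k < phi k.+1)%N) /\
    seq_cvg_to (x \o phi) xbar.

End Defs.

(* Main.v *)
Require Import Defs.
From HB Require Import structures.
From mathcomp Require Import all_boot all_order all_algebra.
From mathcomp Require Import all_classical all_reals all_analysis.
From mathcomp Require Import ring lra.
Import Order.TTheory GRing.Theory Num.Theory.
Import numFieldNormedType.Exports.
Local Open Scope ring_scope.
Local Open Scope classical_set_scope.

Section Aux.
Set Implicit Arguments. Unset Strict Implicit.
Context (R : realType) (n : nat).
Implicit Types (u v z : 'rV[R]_n).

Lemma dotvE u v : dotv u v = \sum_i u 0 i * v 0 i.
Proof. by rewrite /dotv mxE; apply: eq_bigr => i _; rewrite mxE. Qed.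

Lemma qnorm2_diag (A : 'M[R]_n) z : is_diag_mx A ->
  qnorm2 A z = \sum_i A i i * z 0 i ^+ 2.
Proof.
move=> /is_diag_mxP dA; rewrite /qnorm2 mxE; apply: eq_bigr => i _.
rewrite !mxE (bigD1 i) //= big1 ?addr0; first by rewrite expr2; ring.
by move=> j ji; rewrite dA ?mulr0 //.
Qed.

Lemma grad_dot (f : 'rV[R]_n -> R) x v : differentiable f x ->
  dotv (grad f x) v = 'd f x v.
Proof.
move=> df; rewrite dotvE [in RHS](row_sum_delta v) linear_sum.
apply: eq_bigr => i _; rewrite linearZ /= mxE /basisv deriveE //.
by rewrite mulrC.
Qed.

Lemma pos_lb (F : 'I_n -> R) : (forall i, 0 < F i) ->
  exists c : R, 0 < c /\ forall i, c <= F i.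
Proof.
move=> Fp; exists (1 + \sum_i (F i)^-1)^-1; split.
  by rewrite invr_gt0 ltr_wpDr // sumr_ge0 // => i _; rewrite invr_ge0 ltW.
move=> i; rewrite -[F i]invrK lef_pV2 ?posrE ?invr_gt0 //; last first.
  by rewrite ltr_wpDr // sumr_ge0 // => j _; rewrite invr_ge0 ltW.
rewrite (bigD1 i) //= addrCA lerDl addr_ge0 // sumr_ge0 // => j _.
by rewrite invr_ge0 ltW.
Qed.

Lemma conv_grad (f : 'rV[R]_n -> R) x y : differentiable f x -> convex_fun f ->
  f x + dotv (grad f x) (y - x) <= f y.
Proof.
move=> df cf; rewrite grad_dot // -deriveE //.
set v := y - x.
have dv : derivable f x v by exact: diff_derivable.
have H : (fun h : R => h^-1 *: ((f \o shift x) (h *: v) - f x)) @ 0^'+ --> 'D_v f x.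
  apply: cvg_trans dv; apply: cvg_app; apply: within_subset => // u /= u0.
  by rewrite gt_eqF.
rewrite -lerBrDl; apply: (cvgr_to_le H).
near=> h.
have h0 : 0 < h by near: h; exact: nbhs_right_gt.
have h1 : h <= 1 by near: h; apply: nbhs_right_le; exact: ltr01.
have E : h *: v + x = h *: y + (1 - h) *: x.
  by rewrite /v scalerBr scalerBl scale1r -addrA [X in _ + X]addrC.
have := cf y x h; rewrite (ltW h0) h1 => /(_ isT) le.
rewrite /= E ler_pdivrMl //.
lra.
Unshelve. all: by end_near.
Qed.
Lemma sqE (D : 'M[R]_n) (xk g : 'rV[R]_n) i :
  (xk *m diag_sqrt D - g *m diag_invsqrt D) 0 i =
  xk 0 i * Num.sqrt (D i i) - g 0 i / Num.sqrt (D i i).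
Proof. by rewrite /diag_sqrt /diag_invsqrt !mul_mx_diag !mxE. Qed.

Lemma isE (D : 'M[R]_n) (y : 'rV[R]_n) i :
  (y *m diag_invsqrt D) 0 i = y 0 i / Num.sqrt (D i i).
Proof. by rewrite /diag_invsqrt !mul_mx_diag !mxE. Qed.

Lemma ssE (D : 'M[R]_n) (y : 'rV[R]_n) i :
  (y *m diag_sqrt D) 0 i = y 0 i * Num.sqrt (D i i).
Proof. by rewrite /diag_sqrt !mul_mx_diag !mxE. Qed.

Lemma l0_sub (y y' : 'rV[R]_n) : (forall i, y' 0 i != 0 -> y 0 i != 0) ->
  (l0norm y' <= l0norm y)%N.
Proof.
move=> H; apply: subset_leq_card; apply/fintype.subsetP => i; rewrite !inE; exact: H.
Qed.

Lemma step (D : 'M[R]_n) (s : nat) (xk g y : 'rV[R]_n) : (forall i, 0 < D i i) -> Cs s xk ->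
  proj_Cs s (xk *m diag_sqrt D - g *m diag_invsqrt D) y ->
  [/\ Cs s (y *m diag_invsqrt D),
      (forall i, (y *m diag_invsqrt D) 0 i != 0 ->
          D i i * ((y *m diag_invsqrt D) 0 i - xk 0 i) + g 0 i = 0) &
      \sum_i D i i * ((y *m diag_invsqrt D) 0 i - xk 0 i) ^+ 2
      + 2 * \sum_i g 0 i * ((y *m diag_invsqrt D) 0 i - xk 0 i) <= 0].
Proof.
move=> Dp Cxk [Cy opt].
set z := (xk *m diag_sqrt D - g *m diag_invsqrt D).
have a0 i : Num.sqrt (D i i) != 0 by rewrite gt_eqF // sqrtr_gt0.
have aD i : D i i = Num.sqrt (D i i) ^+ 2 by rewrite sqr_sqrtr // ltW.
split.
- apply: leq_trans Cy; apply: l0_sub => i; rewrite isE mulf_eq0 negb_or.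
  by case/andP.
- move=> i; rewrite isE mulf_eq0 negb_or => /andP[yi _].
  pose y' := \row_j (if j == i then z 0 i else y 0 j).
  have Cy' : Cs s y'.
    apply: leq_trans Cy; apply: l0_sub => j; rewrite mxE.
    case: ifP => [/eqP -> _|] //; exact: yi.
  have := opt _ Cy'; rewrite /sqn (bigD1 i) //= [X in _ <= X](bigD1 i) //=.
  rewrite [X in _ <= _ + X](eq_bigr (fun j => (y - z) 0 j ^+ 2)); last first.
    by move=> j /negPf ji; rewrite !mxE ji.
  rewrite lerD2r [(y - z) 0 i]mxE [(y' - z) 0 i]mxE [y' 0 i]mxE eqxx /=.
  rewrite ![(- z) 0 i]mxE subrr expr0n => h.
  have : (y 0 i - z 0 i) ^+ 2 == 0 by rewrite eq_le h sqr_ge0.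
  rewrite sqrf_eq0 subr_eq0 => /eqP ->.
  have -> : z 0 i = xk 0 i * Num.sqrt (D i i) - g 0 i / Num.sqrt (D i i) by exact: sqE.
  have := a0 i; have := aD i; set a := Num.sqrt (D i i) => -> ane.
  by field.
- have Cu : Cs s (xk *m diag_sqrt D).
    apply: leq_trans Cxk; apply: l0_sub => i; rewrite ssE mulf_eq0 negb_or.
    by case/andP.
  have := opt _ Cu; rewrite /sqn -subr_ge0 -sumrB => h.
  rewrite -oppr_ge0; apply: le_trans h _; rewrite le_eqVlt; apply/orP; left.
  apply/eqP; rewrite mulr_sumr -big_split /= -sumrN; apply: eq_bigr => i _.
  rewrite ![(_ - z) 0 i]mxE ![(- z) 0 i]mxE isE ssE.
  have -> : z 0 i = xk 0 i * Num.sqrt (D i i) - g 0 i / Num.sqrt (D i i) by exact: sqE.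
  have := a0 i; have := aD i; set a := Num.sqrt (D i i) => -> ane.
  by field.
Qed.
Lemma near_oo (P : nat -> Prop) : (\forall j \near \oo, P j) ->
  exists N, forall j, (N <= j)%N -> P j.
Proof. by case => N _ HN; exists N => j; apply: HN. Qed.

Lemma oo_near (P : nat -> Prop) N : (forall j, (N <= j)%N -> P j) ->
  \forall j \near \oo, P j.
Proof. by move=> H; exists N. Qed.

Lemma entry_le (A : 'rV[R]_n) i : `|A 0 i| <= `|A|.
Proof. by rewrite -[`|A|]/(mx_norm A) mx_normrE; exact: (le_bigmax _ _ (0, i)). Qed.

Lemma norm_lt (A : 'rV[R]_n) e : 0 < e -> (forall i, `|A 0 i| < e) -> `|A| < e.
Proof.
move=> e0 H; rewrite -[`|A|]/(mx_norm A) mx_normrE; apply: bigmax_lt => // -[a i] _.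
by rewrite /= (ord1 a); exact: H.
Qed.

Lemma term_le (F : 'I_n -> R) i : (forall j, 0 <= F j) -> F i <= \sum_j F j.
Proof.
by move=> H; rewrite (bigD1 i) //= lerDl sumr_ge0.
Qed.
End Aux.

Theorem theorem4p8 (R : realType) (n s : nat) (f : 'rV[R]_n -> R)
    (H D : 'M[R]_n) (x : nat -> 'rV[R]_n) (xbar : 'rV[R]_n) :
  (0 < s)%N ->
  C1 f -> convex_fun f ->
  is_diag_mx H -> (forall i, 0 <= H i i) ->
  (forall x y : 'rV[R]_n,
     f y <= f x + dotv (grad f x) (y - x) + 2^-1 * qnorm2 H (y - x)) ->
  is_diag_mx D -> posdef (D - H) ->
  IWHT_seq f s D x ->
  seq_limit_point x xbar ->
  seq_cvg_to x xbar.
Proof.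
move=> s0 [dfx gc] cf Hd H0 desc Dd pd [Cx0 it] [phi [phimono sub]].
have HD i : H i i < D i i.
  have b0 : @basisv R n i != 0.
    apply/eqP => /matrixP/(_ 0 i); rewrite !mxE !eqxx /=; exact/eqP/oner_neq0.
  have := pd _ b0; rewrite qnorm2_diag; last first.
    apply/is_diag_mxP => a b ab; rewrite !mxE.
    by have /is_diag_mxP dD := Dd; have /is_diag_mxP dH := Hd; rewrite dD // dH // subrr.
  rewrite (bigD1 i) //= big1 => [|j ji]; last by rewrite !mxE eqxx /= (negPf ji) mulr0n expr0n mulr0.
  by rewrite !mxE !eqxx /= expr1n mulr1 addr0 subr_gt0.
have Dpos i : 0 < D i i := le_lt_trans (H0 i) (HD i).
have Cx : forall k, Cs s (x k).
  elim=> // k IH; have [y [py ->]] := it k.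
  by have [] := step Dpos IH py.
have ST k : (forall i, x k.+1 0 i != 0 ->
      D i i * (x k.+1 0 i - x k 0 i) + grad f (x k) 0 i = 0) /\
    \sum_i D i i * (x k.+1 0 i - x k 0 i) ^+ 2
      + 2 * \sum_i grad f (x k) 0 i * (x k.+1 0 i - x k 0 i) <= 0.
  have [y [py ->]] := it k.
  by have [_ ? ?] := step Dpos (Cx k) py.
have DS k : f (x k.+1) <= f (x k) + \sum_i grad f (x k) 0 i * (x k.+1 0 i - x k 0 i)
    + 2^-1 * \sum_i H i i * (x k.+1 0 i - x k 0 i) ^+ 2.
  have := desc (x k) (x k.+1); rewrite dotvE qnorm2_diag //.
  congr (_ <= _ + _ + 2^-1 * _); apply: eq_bigr => i _; by rewrite !mxE.
have DEC k : f (x k.+1) + 2^-1 * \sum_i (D i i - H i i) * (x k.+1 0 i - x k 0 i) ^+ 2 <= f (x k).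
  have [_ h2] := ST k; have h1 := DS k.
  have -> : \sum_i (D i i - H i i) * (x k.+1 0 i - x k 0 i) ^+ 2 = \sum_i D i i * (x k.+1 0 i - x k 0 i) ^+ 2 - \sum_i H i i * (x k.+1 0 i - x k 0 i) ^+ 2.
    by rewrite -sumrB; apply: eq_bigr => i _; rewrite mulrBl.
  lra.
have POS k : 0 <= \sum_i (D i i - H i i) * (x k.+1 0 i - x k 0 i) ^+ 2.
  by apply: sumr_ge0 => i _; rewrite mulr_ge0 // ?sqr_ge0 // subr_ge0 ltW.
have mono k d : f (x (d + k)%N) <= f (x k).
  elim: d => // d IH; apply: le_trans IH; rewrite addSn.
  have := DEC (d + k)%N; have := POS (d + k)%N; lra.
have phige j : (j <= phi j)%N.
  by elim: j => // j IH; exact: leq_ltn_trans IH (phimono j).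
have fcont : (f \o (x \o phi)) @ \oo --> f xbar.
  apply: cvg_comp sub _; exact: (differentiable_continuous (dfx xbar)).
have fbar k : f xbar <= f (x k).
  apply: (cvgr_to_le fcont); apply: (@oo_near _ k) => j kj /=.
  have := mono k (phi j - k)%N; rewrite subnK //; exact: leq_trans kj (phige j).
have fsmall e : 0 < e -> exists K, forall k, (K <= k)%N -> f (x k) - f xbar < e.
  move=> e0; have /cvgrPdist_lt /(_ e e0) /near_oo [N HN] := fcont.
  exists (phi N) => k Nk; have := HN N (leqnn N); rewrite /= ltr_norml => /andP[h3 h4].
  have := mono (phi N) (k - phi N)%N; rewrite subnK // => h1; lra.
pose Nd k := \sum_i D i i * (x k 0 i - xbar 0 i) ^+ 2.
pose Ns k := \sum_i D i i * (x k.+1 0 i - x k 0 i) ^+ 2.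
have steps ep : 0 < ep -> exists K, forall k, (K <= k)%N -> Ns k < ep.
  move=> ep0.
  have [c [c0 cle]] : exists c : R, 0 < c /\ forall i, c <= (D i i - H i i) / (2 * D i i).
    by apply: pos_lb => i; rewrite divr_gt0 // ?subr_gt0 // mulr_gt0.
  have [K HK] := fsmall (c * ep) (mulr_gt0 c0 ep0).
  exists K => k Kk; have := HK k Kk; have := DEC k; have := fbar k.+1.
  have : c * Ns k <= 2^-1 * \sum_i (D i i - H i i) * (x k.+1 0 i - x k 0 i) ^+ 2.
    rewrite /Ns mulr_sumr mulr_sumr; apply: ler_sum => i _.
    have := cle i; rewrite ler_pdivlMr ?mulr_gt0 // => h.
    have := sqr_ge0 (x k.+1 0 i - x k 0 i); nra.
  move=> h1 h2 h3 h4.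
  have : c * Ns k < c * ep by lra.
  by rewrite ltr_pM2l.
have Sub et : 0 < et -> forall K, exists k, (K <= k)%N /\ Nd k < et.
  move=> et0 K.
  pose S := \sum_i D i i.
  have S0 : 0 <= S by apply: sumr_ge0 => i _; exact: ltW.
  have S1 : 0 < S + 1 by lra.
  pose r := Num.min 1 (et / (S + 1)).
  have r0 : 0 < r by rewrite lt_min ltr01 divr_gt0.
  have r1 : r <= 1 by rewrite /r ge_min lexx.
  have r2 : r <= et / (S + 1) by rewrite /r ge_min lexx orbT.
  have /cvgrPdist_lt /(_ r r0) /near_oo [N HN] := sub.
  exists (phi (maxn N K)); split; first exact: leq_trans (leq_maxr N K) (phige _).
  have := HN (maxn N K) (leq_maxl _ _) => /= hn.
  have ent i : (x (phi (maxn N K)) 0 i - xbar 0 i) ^+ 2 <= et / (S + 1).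
    have := le_lt_trans (entry_le _ i) hn; rewrite !mxE ltr_norml => /andP[a b].
    nra.
  apply: (@le_lt_trans _ _ (\sum_i D i i * (et / (S + 1)))).
    by apply: ler_sum => i _; rewrite ler_wpM2l // ltW.
  rewrite -mulr_suml -/S mulrA ltr_pdivrMr //; nra.
have FEJ k : (forall i, xbar 0 i != 0 -> x k.+1 0 i != 0) -> Nd k.+1 <= Nd k.
  move=> supp.
  have [P1 _] := ST k.
  have T i : D i i * (x k.+1 0 i - xbar 0 i) ^+ 2 = D i i * (x k 0 i - xbar 0 i) ^+ 2
      + (-2 * (grad f (x k) 0 i * (x k.+1 0 i - xbar 0 i)) - D i i * (x k.+1 0 i - x k 0 i) ^+ 2).
    have [z0|nz] := eqVneq (x k.+1 0 i) 0.
      have xb0 : xbar 0 i = 0.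
        by case: (eqVneq (xbar 0 i) 0) => // /supp; rewrite z0 eqxx.
      rewrite z0 xb0; ring.
    have e := P1 i nz.
    have -> : grad f (x k) 0 i = - (D i i * (x k.+1 0 i - x k 0 i)) by lra.
    ring.
  have E1 : Nd k.+1 = Nd k + (-2 * \sum_i grad f (x k) 0 i * (x k.+1 0 i - xbar 0 i) - Ns k).
    rewrite /Nd /Ns mulr_sumr -sumrB -big_split /=; apply: eq_bigr => i _; exact: T.
  have CV := conv_grad xbar (dfx (x k)) cf.
  rewrite dotvE in CV.
  have E2 : \sum_i grad f (x k) 0 i * (xbar - x k) 0 i =
     - \sum_i grad f (x k) 0 i * (x k.+1 0 i - xbar 0 i) + \sum_i grad f (x k) 0 i * (x k.+1 0 i - x k 0 i).
    rewrite -sumrN -big_split /=; apply: eq_bigr => i _; rewrite !mxE; ring.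
  have E3 : \sum_i H i i * (x k.+1 0 i - x k 0 i) ^+ 2 <= Ns k.
    by apply: ler_sum => i _; rewrite ler_wpM2r ?sqr_ge0 // ltW.
  have := DS k; have := fbar k.+1; lra.
have [ep [ep0 eple]] : exists ep : R, 0 < ep /\ forall i,
    ep <= (if xbar 0 i != 0 then D i i * xbar 0 i ^+ 2 / 4 else 1).
  apply: pos_lb => i; case: ifP => // nz.
  by rewrite divr_gt0 // mulr_gt0 // lt_def sqrf_eq0 nz sqr_ge0.
have SUPP k : Nd k.+1 < 4 * ep -> forall i, xbar 0 i != 0 -> x k.+1 0 i != 0.
  move=> h i nz; apply/negP => /eqP z0.
  have t : D i i * (x k.+1 0 i - xbar 0 i) ^+ 2 <= Nd k.+1.
    apply: (term_le (F := fun j => D j j * (x k.+1 0 j - xbar 0 j) ^+ 2)) => j.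
    by rewrite mulr_ge0 ?sqr_ge0 // ltW.
  have := eple i; rewrite nz z0 in t *; nra.
have TRI k : Nd k.+1 <= 2 * Nd k + 2 * Ns k.
  rewrite /Nd /Ns !mulr_sumr -big_split /=; apply: ler_sum => i _.
  have := mulr_ge0 (ltW (Dpos i)) (sqr_ge0 (x k 0 i - xbar 0 i - (x k.+1 0 i - x k 0 i))).
  nra.
have [K HK] := steps ep ep0.
have [k0 [Kk0 Nk0]] := Sub ep ep0 K.
have FE k : (K <= k)%N -> Nd k < ep -> Nd k.+1 <= Nd k.
  move=> Kk h; apply: FEJ; apply: SUPP; have := TRI k; have := HK k Kk; lra.
have INV m : Nd (m + k0)%N < ep.
  elim: m => [|m IH] //; rewrite addSn.
  apply: le_lt_trans (FE _ _ IH) IH; exact: leq_trans Kk0 (leq_addl m k0).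
have MON k d : (k0 <= k)%N -> Nd (d + k)%N <= Nd k.
  move=> kk; elim: d => // d IH; rewrite addSn; apply: le_trans IH.
  have kk' : (k0 <= d + k)%N by exact: leq_trans kk (leq_addl _ _).
  apply: FE; first exact: leq_trans Kk0 kk'.
  by have := INV (d + k - k0)%N; rewrite subnK.
have [m0 [m00 m0le]] : exists m0 : R, 0 < m0 /\ forall i, m0 <= D i i.
  exact: pos_lb.
rewrite /seq_cvg_to; apply/cvgrPdist_lt => e e0.
have [k1 [k01 Nk1]] := Sub (m0 * e ^+ 2) (mulr_gt0 m00 (exprn_gt0 2 e0)) k0.
apply: (@oo_near _ k1) => k k1k.
have := MON k1 (k - k1)%N k01; rewrite subnK // => hk.
apply: norm_lt => // i; rewrite !mxE.
have t : D i i * (x k 0 i - xbar 0 i) ^+ 2 <= Nd k.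
  apply: (term_le (F := fun j => D j j * (x k 0 j - xbar 0 j) ^+ 2)) => j.
  by rewrite mulr_ge0 ?sqr_ge0 // ltW.
have t2 : (x k 0 i - xbar 0 i) ^+ 2 < e ^+ 2.
  rewrite -(ltr_pM2l (Dpos i)); apply: (le_lt_trans t); apply: (le_lt_trans hk).
  apply: (lt_le_trans Nk1); rewrite ler_wpM2r ?sqr_ge0 //.
rewrite ltr_norml; apply/andP; split; nra.
Qed.
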